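(* Let $n\ge2$. Among sets $K\in\mathcal S_n\setminus\{\emptyset,\mathbb R^n\}$, the unit balls $B(x,1)$, $x\in\mathbb R^n$, are the only ones with no $c$-extremal points.
   Context: $B(x,r)$ is the closed Euclidean ball. For $A\subseteq\mathbb R^n$, $A^c=\bigcap_{x\in A}B(x,1)$ (with $\emptyset^c=\mathbb R^n$), and $\mathrm{conv}_c(A)=A^{cc}$ is its $c$-hull. $\mathcal S_n$ is the class of all sets of the form $\bigcap_{x\in A}B(x,1)$, $A\subseteq\mathbb R^n$. For $K\in\mathcal S_n$, a point $x\in K$ is $c$-extremal for $K$ if whenever $x\in\mathrm{conv}_c(\{y,z\})$ with $y,z\in K$, then $y=x$ or $z=x$. *)

(* Defs.v *)
From mathcomp Require Import all_boot all_order all_algebra.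
From mathcomp Require Import classical_sets reals.
Set Implicit Arguments. Unset Strict Implicit. Unset Printing Implicit Defensive.
Import Order.TTheory GRing.Theory Num.Theory.
Local Open Scope ring_scope.
Local Open Scope classical_set_scope.

Definition sqdist (R : realType) (n : nat) (x y : 'rV[R]_n) : R :=
  \sum_(i < n) (x ord0 i - y ord0 i) ^+ 2.

Definition ball1 (R : realType) (n : nat) (x : 'rV[R]_n) : set 'rV[R]_n :=
  [set y | sqdist x y <= 1].

(* A^c = intersection of B(x,1) over x in A; empty intersection = R^n *)
Definition cdual (R : realType) (n : nat) (A : set 'rV[R]_n) : set 'rV[R]_n :=
  [set y | forall x, A x -> ball1 x y].

Definition chull (R : realType) (n : nat) (A : set 'rV[R]_n) : set 'rV[R]_n :=
  cdual (cdual A).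

Definition in_Sn (R : realType) (n : nat) (K : set 'rV[R]_n) : Prop :=
  exists A : set 'rV[R]_n, K = cdual A.

Definition c_extremal (R : realType) (n : nat) (K : set 'rV[R]_n) (x : 'rV[R]_n) : Prop :=
  K x /\ forall y z, K y -> K z -> chull [set y; z] x -> y = x \/ z = x.

(* Main.v *)
Require Import Defs.
From mathcomp Require Import all_boot all_order all_algebra.
From mathcomp Require Import classical_sets reals.
From mathcomp Require Import all_classical all_reals all_analysis.
From mathcomp Require Import ring lra.
Set Implicit Arguments. Unset Strict Implicit. Unset Printing Implicit Defensive.
Import Order.TTheory GRing.Theory Num.Theory.
Import numFieldNormedType.Exports.
Local Open Scope classical_set_scope.

Section S.
Local Open Scope ring_scope.
Variables (R : realType) (n : nat).
Implicit Types (x y : 'rV[R]_n).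

Lemma sum1 (f g1 : 'I_n -> R) c1 :
  (forall i, f i = c1 * g1 i) -> \sum_i f i = c1 * \sum_i g1 i.
Proof. by move=> h; rewrite mulr_sumr; apply: eq_bigr => i _; exact: h. Qed.

Lemma sum2 (f g1 g2 : 'I_n -> R) c1 c2 :
  (forall i, f i = c1 * g1 i + c2 * g2 i) ->
  \sum_i f i = c1 * \sum_i g1 i + c2 * \sum_i g2 i.
Proof. by move=> h; rewrite !mulr_sumr -big_split; apply: eq_bigr => i _; exact: h. Qed.

Lemma sum3 (f g1 g2 g3 : 'I_n -> R) c1 c2 c3 :
  (forall i, f i = c1 * g1 i + c2 * g2 i + c3 * g3 i) ->
  \sum_i f i = c1 * \sum_i g1 i + c2 * \sum_i g2 i + c3 * \sum_i g3 i.
Proof. by move=> h; rewrite !mulr_sumr -!big_split; apply: eq_bigr => i _; exact: h. Qed.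

Lemma sum4 (f g1 g2 g3 g4 : 'I_n -> R) c1 c2 c3 c4 :
  (forall i, f i = c1 * g1 i + c2 * g2 i + c3 * g3 i + c4 * g4 i) ->
  \sum_i f i = c1 * \sum_i g1 i + c2 * \sum_i g2 i + c3 * \sum_i g3 i
     + c4 * \sum_i g4 i.
Proof. by move=> h; rewrite !mulr_sumr -!big_split; apply: eq_bigr => i _; exact: h. Qed.

Lemma sqdist_ge0 x y : 0 <= sqdist x y.
Proof. by apply: sumr_ge0 => i _; rewrite sqr_ge0. Qed.

Lemma sqdist_eq0 x y : sqdist x y = 0 -> x = y.
Proof.
move=> /eqP; rewrite /sqdist psumr_eq0; last by move=> i _; rewrite sqr_ge0.
move=> /allP h; apply/matrixP => i j; rewrite (ord1 i).
have := h j (mem_index_enum _); rewrite sqrf_eq0 subr_eq0 => /eqP; done.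
Qed.

Lemma sqdist_gt0 x y : x <> y -> 0 < sqdist x y.
Proof.
move=> xy; rewrite lt_def sqdist_ge0 andbT; apply/eqP => /sqdist_eq0; exact: xy.
Qed.

Lemma sqdistC x y : sqdist x y = sqdist y x.
Proof. by rewrite /sqdist; apply: eq_bigr => i _; ring. Qed.

Lemma sqdistxx x : sqdist x x = 0.
Proof. by rewrite /sqdist big1 // => i _; rewrite subrr expr2 mulr0. Qed.

Lemma coord_le x y i : (x ord0 i - y ord0 i) ^+ 2 <= sqdist x y.
Proof.
rewrite /sqdist (bigD1 i) //= lerDl; apply: sumr_ge0 => j _; exact: sqr_ge0.
Qed.


Lemma orth (hn : (2 <= n)%N) (w : 'I_n -> R) : \sum_i w i ^+ 2 <= 1 ->
  exists v : 'I_n -> R, [/\ \sum_i w i * v i = 0, 0 < \sum_i v i ^+ 2 &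
     \sum_i v i ^+ 2 <= 1].
Proof.
move=> W1.
have h0 : (0 < n)%N by apply: leq_trans hn.
pose i0 : 'I_n := Ordinal h0. pose i1 : 'I_n := Ordinal hn.
have i01 : (i1 != i0) by [].
have [w0|w0] := eqVneq (w i0) 0.
  exists (fun i => if i == i0 then 1 else 0).
  have E : forall F : R -> R, F 0 = 0 -> \sum_i F (if i == i0 then 1 else 0) = F 1.
    move=> F F0; rewrite (bigD1 i0) //= ?eqxx big1 ?addr0 // => i /negbTE ->; exact F0.
  split.
  - rewrite (bigD1 i0) //= ?eqxx w0 mul0r add0r big1 // => i /negbTE ->; exact: mulr0.
  - by rewrite (E (fun r : R => r ^+ 2)) ?expr1n ?expr0n.
  - by rewrite (E (fun r : R => r ^+ 2)) ?expr1n ?expr0n.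
pose v i := if i == i0 then - w i1 else if i == i1 then w i0 else 0.
have E : forall F : 'I_n -> R -> R, (forall i, F i 0 = 0) ->
    \sum_i F i (v i) = F i0 (- w i1) + F i1 (w i0).
  move=> F F0; rewrite (bigD1 i0) //= (bigD1 i1) //= /v ?eqxx ?(negbTE i01) ?eqxx.
  rewrite big1 ?addr0 // => i /andP [/negbTE -> /negbTE ->]; exact: F0.
exists v; split.
- by rewrite (E (fun i (r : R) => w i * r)) => [|i]; [ring|exact: mulr0].
- rewrite (E (fun i (r : R) => r ^+ 2)) => [|i]; last by rewrite expr0n.
  by rewrite ltr_wpDl ?sqr_ge0 // lt_def sqr_ge0 andbT sqrf_eq0.
- rewrite (E (fun i (r : R) => r ^+ 2)) => [|i]; last by rewrite expr0n.
  apply: le_trans W1; rewrite (bigD1 i0) //= (bigD1 i1) //= addrA sqrrN addrC.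
  rewrite [X in _ <= _ + X]addrC lerDr; by apply: sumr_ge0 => i _; exact: sqr_ge0.
Qed.

Lemma scal1 (r m : R) : 0 < r -> r < 1 -> 0 < m ->
  exists l, 0 <= l /\ 1 < (1 + l) ^+ 2 * r /\ (1 + l) ^+ 2 * r - l * m <= 1.
Proof.
move=> r0 r1 m0.
set s := Num.sqrt r.
have s2 : s ^+ 2 = r by rewrite sqr_sqrtr // ltW.
have s0 : 0 < s by rewrite sqrtr_gt0.
have s1 : s < 1 by nra.
set k := (1 - s) * m.
have k0 : 0 < k by rewrite mulr_gt0 // subr_gt0.
set e := k / (3 + k).
have ek : e * (3 + k) = k by rewrite /e mulfVK // gt_eqF // ltr_wpDl // ltW.
have e0 : 0 < e by rewrite divr_gt0 // ltr_wpDr // ltW.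
set l := (1 + e) / s - 1.
have ls : (1 + l) * s = 1 + e by rewrite /l addrC subrK mulfVK // gt_eqF.
have l1 : 1 - s <= l.
  rewrite /l lerBrDr ler_pdivlMr //; nra.
exists l; split; first nra.
have -> : (1 + l) ^+ 2 * r = (1 + e) ^+ 2 by rewrite -s2 -ls; ring.
split; first nra.
have h1 : k <= l * m by rewrite ler_wpM2r // ltW.
have e1 : e <= 1.
  have : e * (3 + k) <= 1 * (3 + k) by rewrite ek mul1r lerDr; lra.
  by rewrite ler_pM2r // ltr_wpDr // ltW.
have h2 : e ^+ 2 <= e by rewrite expr2 ler_piMl // ltW.
have h3 : 0 <= e * k by rewrite mulr_ge0 // ltW.
have : 3 * e + e * k = k by rewrite -[RHS]ek mulrDr mulrC.

nra.
Qed.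

Lemma scal2 (W N : R) : 0 <= W -> W <= 1 -> 0 < N -> N <= 1 ->
  exists a b, [/\ a ^+ 2 * W + b ^+ 2 * N <= 1,
     0 < (1 - a) ^+ 2 * W + b ^+ 2 * N &
     forall S U, 0 <= S -> S - 2 * a * U + a ^+ 2 * W + b ^+ 2 * N <= 1 ->
        S - 2 * U + W <= 1].
Proof.
move=> W0 W1 N0 N1.
have [Wl|We] := ltP W 1.
  set b := (1 - W) / 2.
  have hb : 2 * b = 1 - W by rewrite /b mulrC mulfVK // pnatr_eq0.
  have b0 : 0 < b by rewrite divr_gt0 // subr_gt0.
  have b2 : b ^+ 2 * N <= b ^+ 2 by rewrite ler_piMr // sqr_ge0.
  have b3 : b ^+ 2 <= b by rewrite expr2 ler_piMl // ?ltW //; lra.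
  exists 1, b; split.
  - rewrite expr1n mul1r; lra.
  - rewrite subrr expr0n /= mul0r add0r; apply: mulr_gt0 => //; exact: exprn_gt0.
  - move=> S U _; nra.
have -> : W = 1 by apply/eqP; rewrite eq_le W1 We.
set D := 1 + N / 4.
have D1 : 1 <= D by rewrite /D lerDl divr_ge0 // ltW.
have DD : D * D^-1 = 1 by rewrite mulfV // gt_eqF // (lt_le_trans ltr01).
have D0 : D != 0 by rewrite gt_eqF // (lt_le_trans ltr01).
set a := (1 - N / 4) / D.
have hab : a ^+ 2 * 1 + D^-1 ^+ 2 * N = 1.
  rewrite /a /D; field.
  rewrite gt_eqF //; lra.
have a0 : 0 < a.
  have h4 : N / 4 < 1 by rewrite ltr_pdivrMr // mul1r; lra.
  have D0' : 0 < D by apply: (lt_le_trans ltr01).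
  rewrite /a divr_gt0 //; lra.
have a1 : a <= 1.
  have D0' : 0 < D by apply: (lt_le_trans ltr01).
  rewrite /a ler_pdivrMr // mul1r /D.
  have : 0 <= N / 4 by rewrite divr_ge0 // ltW.
  lra.
exists a; exists D^-1; split.
- by rewrite hab.
- have : 0 < D^-1 ^+ 2 * N by rewrite mulr_gt0 // exprn_gt0 // invr_gt0 (lt_le_trans ltr01).
  have := sqr_ge0 (1 - a). lra.
- move=> S U S0; rewrite mulr1 in hab; rewrite mulr1 -addrA hab => h.
  have hU : 0 <= a * U by nra.
  have U0 : 0 <= U.
    by move: hU; rewrite pmulr_rge0.
  nra.
Qed.

Lemma ball_no_ext (hn : (2 <= n)%N) x0 p : ~ c_extremal (ball1 x0) p.
Proof.
move=> [Kp hext]; rewrite /ball1 /= in Kp.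
pose w i := p ord0 i - x0 ord0 i.
have EW : sqdist x0 p = \sum_i w i ^+ 2 by apply: eq_bigr => i _; rewrite /w; ring.
have [v [wv N0 N1]] : exists v : 'I_n -> R, [/\ \sum_i w i * v i = 0, 0 < \sum_i v i ^+ 2 &
     \sum_i v i ^+ 2 <= 1] by apply: orth => //; rewrite -EW.
set W := sqdist x0 p in EW Kp.
set N := \sum_i v i ^+ 2 in N0 N1.
have [a [b [h1 h2 h3]]] := scal2 (sqdist_ge0 x0 p) Kp N0 N1.
pose y := \row_i (x0 ord0 i + a * w i + b * v i).
pose z := \row_i (x0 ord0 i + a * w i - b * v i).
have Ky : ball1 x0 y.
  rewrite /ball1 /=. 
  have -> : sqdist x0 y = a ^+ 2 * W + (2 * a * b) * (\sum_i w i * v i) + b ^+ 2 * N.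
    rewrite EW; apply: sum3 => i; rewrite mxE; ring.
  by rewrite wv mulr0 addr0.
have Kz : ball1 x0 z.
  rewrite /ball1 /=. 
  have -> : sqdist x0 z = a ^+ 2 * W + (- 2 * a * b) * (\sum_i w i * v i) + b ^+ 2 * N.
    rewrite EW; apply: sum3 => i; rewrite mxE; ring.
  by rewrite wv mulr0 addr0.
have yp : y <> p.
  move=> e; have := sqdistxx p; rewrite -{2}e.
  have -> : sqdist p y = (1 - a) ^+ 2 * W + (- 2 * (1 - a) * b) * (\sum_i w i * v i) + b ^+ 2 * N.
    rewrite EW; apply: sum3 => i; rewrite mxE /w; ring.
  by rewrite wv mulr0 addr0 => e2; move: h2; rewrite e2 ltxx.
have zp : z <> p.
  move=> e; have := sqdistxx p; rewrite -{2}e.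
  have -> : sqdist p z = (1 - a) ^+ 2 * W + (2 * (1 - a) * b) * (\sum_i w i * v i) + b ^+ 2 * N.
    rewrite EW; apply: sum3 => i; rewrite mxE /w; ring.
  by rewrite wv mulr0 addr0 => e2; move: h2; rewrite e2 ltxx.
have hch : chull [set y; z] p.
  move=> c hc; rewrite /ball1 /=.
  have hy : sqdist y c <= 1 by apply: hc; left.
  have hz : sqdist z c <= 1 by apply: hc; right.
  pose S := \sum_i (c ord0 i - x0 ord0 i) ^+ 2.
  pose U := \sum_i (c ord0 i - x0 ord0 i) * w i.
  have S0 : 0 <= S by apply: sumr_ge0 => i _; exact: sqr_ge0.
  have E1 : sqdist y c + sqdist z c = 2 * S + (- 4 * a) * U + (2 * a ^+ 2) * W + (2 * b ^+ 2) * N.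
    rewrite /sqdist -big_split EW; apply: sum4 => i /=; rewrite !mxE /w; ring.
  have E2 : sqdist c p = 1 * S + (- 2) * U + 1 * W.
    rewrite EW; apply: sum3 => i; rewrite /w; ring.
  rewrite E2 !mul1r.
  have := h3 S U S0.
  have : S - 2 * a * U + a ^+ 2 * W + b ^+ 2 * N <= 1 by lra.
  move=> H1 H2; have := H2 H1; rewrite -/W; lra.
by case: (hext y z Ky Kz hch).
Qed.

Lemma sum_cont (I : eqType) (r : seq I) (F : I -> 'rV[R]_n -> R) :
  (forall i, continuous (F i)) -> continuous (fun y => \sum_(i <- r) F i y).
Proof.
move=> Fc; elim: r => [|a r IH].
  under eq_fun do rewrite big_nil. exact: cst_continuous.
under eq_fun do rewrite big_cons.
by move=> y; apply: continuousD; [exact: Fc|exact: IH].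
Qed.

Lemma sqdist_cont x : continuous (fun y => sqdist x y).
Proof.
rewrite /sqdist; apply: sum_cont => i.
under eq_fun do rewrite expr2.
have h : continuous (fun y : 'rV[R]_n => x ord0 i - y ord0 i).
  move=> y; apply: (@continuousB _ _ _ (fun=> x ord0 i) (fun y : 'rV[R]_n => y ord0 i)).
    exact: cst_continuous.
  exact: coord_continuous.
move=> y; have := continuousM (h y) (h y); exact.
Qed.

Lemma sqdist_cont' x : continuous (fun y => sqdist y x).
Proof.
rewrite /sqdist; apply: sum_cont => i.
under eq_fun do rewrite expr2.
have h : continuous (fun y : 'rV[R]_n => y ord0 i - x ord0 i).
  move=> y; apply: (@continuousB _ _ _ (fun y : 'rV[R]_n => y ord0 i) (fun=> x ord0 i)).
    exact: coord_continuous.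
  exact: cst_continuous.
move=> y; have := continuousM (h y) (h y); exact.
Qed.

Lemma cdual_closed (A : set 'rV[R]_n) : closed (cdual A).
Proof.
have -> : cdual A = \bigcap_(a in A) [set y | sqdist a y <= 1].
  by apply/seteqP; split => y /= H a Aa; apply: H.
apply: closed_bigI => a _.
have -> : [set y | sqdist a y <= 1] = (fun y => sqdist a y) @^-1` [set r : R | r <= 1] by [].
apply: preimage_closed; last exact: closed_le.
move=> y _; exact: sqdist_cont.
Qed.


Lemma exists_extremal (A : set 'rV[R]_n) a b : A a -> A b -> a <> b ->
  cdual A !=set0 -> exists p, c_extremal (cdual A) p.
Proof.
move=> Aa Ab ab [y0 Ky0].
set K := cdual A in Ky0 *.
pose q := \row_i ((a ord0 i + b ord0 i) / 2).
have d0 : 0 < sqdist a b := sqdist_gt0 ab.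
have hq : forall y, K y -> 4 * sqdist q y + sqdist a b <= 4.
  move=> y Ky; have ha := Ky a Aa; have hb := Ky b Ab.
  rewrite /ball1 /= in ha hb.
  have E : sqdist a y + sqdist b y = 2 * sqdist q y + (1/2) * sqdist a b.
    rewrite /sqdist -big_split; apply: sum2 => i /=; rewrite mxE; field; by rewrite ?pnatr_eq0.
  have : 4 * sqdist a y + 4 * sqdist b y = 8 * sqdist q y + 2 * sqdist a b.
    have -> : 4 * sqdist a y + 4 * sqdist b y = 4 * (sqdist a y + sqdist b y) by ring.
    rewrite E; field; by rewrite ?pnatr_eq0.
  lra.
have cK : compact K.
  have Bc : compact [set v : 'rV[R]_n | forall i,
      `[a ord0 i - 1, a ord0 i + 1]%classic (v ord0 i)].
    apply: (@rV_compact _ _ (fun i => `[a ord0 i - 1, a ord0 i + 1]%classic)).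
    move=> i; exact: segment_compact.
  apply: (subclosed_compact (@cdual_closed A) Bc).
  - move=> y Ky i /=; have := Ky a Aa; rewrite /ball1 /= => h.
    have := le_trans (@coord_le a y i) h => hi.
    rewrite in_itv /=; apply/andP; split; nra.
have [p pK pmax] := EVT_max_rV (f := fun y => sqdist q y) (ex_intro _ y0 Ky0) cK
   (continuous_subspaceT (@sqdist_cont q)).
have Kp : K p by rewrite inE in pK.
have pm : forall w, K w -> sqdist q w <= sqdist q p by move=> w Kw; apply: pmax; rewrite inE.
exists p; split => // y z Ky Kz hch.
have [->|yp] := eqVneq y p; first by left.
have [->|zp] := eqVneq z p; first by right.
exfalso.
set m := Num.min (sqdist p y) (sqdist p z).
have m0 : 0 < m.
  have py : p <> y by move=> e; move: yp; rewrite e eqxx.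
  have pz : p <> z by move=> e; move: zp; rewrite e eqxx.
  by rewrite lt_min !sqdist_gt0.
set r := sqdist q p.
have r1 : r < 1 by have := hq p Kp; rewrite -/r; lra.
have r0 : 0 < r.
  rewrite lt_def sqdist_ge0 andbT; apply/eqP => e.
  have qp := sqdist_eq0 e.
  have : sqdist q y <= 0 by rewrite -/r -e; exact: pm.
  move=> h; have qy : sqdist q y = 0 by apply/eqP; rewrite eq_le h sqdist_ge0.
  by move: yp; rewrite -(sqdist_eq0 qy) qp eqxx.
have [l [l0 [l1 l2]]] := scal1 r0 r1 m0.
pose c := \row_i (q ord0 i - l * (p ord0 i - q ord0 i)).
have key : forall w, K w -> m <= sqdist p w -> sqdist w c <= 1.
  move=> w Kw mw.
  have -> : sqdist w c = (1 + l) * sqdist q w + (l + l ^+ 2) * r + (- l) * sqdist p w.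
    apply: sum3 => i; rewrite mxE; ring.
  have h1 : (1 + l) * sqdist q w <= (1 + l) * r by rewrite ler_wpM2l ?pm //; lra.
  have h2 : l * m <= l * sqdist p w by rewrite ler_wpM2l.
  have h3 : (1 + l) * r + (l + l ^+ 2) * r = (1 + l) ^+ 2 * r by ring.
  lra.
have hc : cdual [set y; z] c.
  move=> w [->|->]; apply: key => //; rewrite /m ge_min lexx ?orbT //.
have := hch c hc; rewrite /ball1 /=.
have -> : sqdist c p = (1 + l) ^+ 2 * r by apply: sum1 => i; rewrite mxE; ring.
lra.
Qed.

End S.

Unset Implicit Arguments.

Theorem theorem4p5 (R : realType) (n : nat) (hn : (2 <= n)%N)
  (K : set 'rV[R]_n) (hK : in_Sn K) (hne : K <> set0) (hnT : K <> setT) :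
  (forall x, ~ c_extremal K x) <-> (exists x : 'rV[R]_n, K = ball1 x).
Proof.
split; last by move=> [x0 ->] p; exact: ball_no_ext.
move=> noext; case: hK => A KA; subst K.
have [a Aa] : exists a, A a.
  apply: contrapT => nA; apply: hnT; apply/seteqP; split => // y _ x Ax.
  by exfalso; apply: nA; exists x.
have [[b [c [Ab [Ac bc]]]]|H] := pselect (exists b c, A b /\ A c /\ b <> c).
  have Kne : cdual A !=set0 by apply/set0P/eqP.
  by have [p /noext] := exists_extremal Ab Ac bc Kne.
exists a; apply/seteqP; split => y /=.
  by move=> hy; exact: hy a Aa.
move=> hy x Ax; have -> : x = a; last exact: hy.
by apply: contrapT => xa; apply: H; exists x, a.
Qed.
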